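(* For $n \ge 0$ let $w(n,0)$ denote the number of compositions of $n$ with all parts in $\{1,2\}$ having exactly $0$ water cells. Then \[ \sum_{n \ge 0} w(n,0) q^n = \frac{1}{1-q} + \frac{q^2}{(1-q)^2(1-q^2)} = \frac{1-q+q^3}{1 - 2 q + 2 q^3 - q^4}. \] Moreover, for each $n \ge 0$ the following values are equal: (a) $w(n,0)$; (b) $\lfloor n^2/4 \rfloor + 1$; (c) $w(n-2,0) + n - 1$ (for $n \ge 2$); (d) $2w(n-1,0) - 2w(n-3,0) + w(n-4,0)$ (for $n \ge 4$).
   Context: A composition of $n \ge 0$ is a finite sequence $(c_1,\dots,c_t)$ of positive integers with $c_1+\cdots+c_t=n$; the empty composition is the unique composition of $0$. Let $C_{12}(n)$ be the set of compositions of $n$ all of whose parts lie in $\{1,2\}$. The number of water cells of a composition $(c_1,\dots,c_t)$ is $\sum_{i=1}^{t} \max\bigl(0, \min(\max_{j \le i} c_j, \max_{j \ge i} c_j) - c_i\bigr)$ (the number of unit squares that would hold water poured over its bargraph, in which column $i$ has height $c_i$). For $n,k \ge 0$, $W(n,k)$ is the set of compositions in $C_{12}(n)$ with exactly $k$ water cells and $w(n,k)=|W(n,k)|$. *)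

(* Defs.v *)
From mathcomp Require Import all_boot all_order all_algebra.
Set Implicit Arguments. Unset Strict Implicit. Unset Printing Implicit Defensive.
Import GRing.Theory Num.Theory.

Fixpoint seqs12 (m : nat) : seq (seq nat) :=
  match m with
  | 0 => [:: [::]]
  | m'.+1 => [::] :: [seq x :: s | x <- [:: 1; 2], s <- seqs12 m']
  end.

(* C_{12}(n): compositions of n with all parts in {1,2}
   (such a composition has at most n parts). *)
Definition C12 (n : nat) : seq (seq nat) :=
  [seq s <- seqs12 n | (sumn s == n) && all (fun x => x \in [:: 1; 2]) s].

(* Number of water cells of a composition c = (c_1,...,c_t) (0-indexed here):
   sum_i max(0, min(max_{j<=i} c_j, max_{j>=i} c_j) - c_i);
   the truncated nat subtraction realises max(0, _). *)
Definition water (c : seq nat) : nat :=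
  \sum_(0 <= i < size c)
     (minn (\max_(0 <= j < size c | j <= i) nth 0 c j)
           (\max_(0 <= j < size c | i <= j) nth 0 c j) - nth 0 c i).

Definition w (n k : nat) : nat := count (fun c => water c == k) (C12 n).

Definition fps := nat -> int.

Definition fps_add (f g : fps) : fps := fun n => (f n + g n)%R.
Definition fps_mul (f g : fps) : fps :=
  fun n => (\sum_(0 <= i < n.+1) f i * g (n - i)%N)%R.
Definition fps_poly (s : seq int) : fps := fun n => nth 0%R s n.

(* Coefficients 0..n of the reciprocal 1/f of a series f with f 0 = 1:
   g_0 = 1, g_n = - sum_{k<n} f_{n-k} g_k. *)
Fixpoint inv_coefs (f : fps) (n : nat) : seq int :=
  match n with
  | 0 => [:: 1%R]
  | n'.+1 => let s := inv_coefs f n' in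
             rcons s (- \sum_(0 <= k < n) f (n - k)%N * nth 0%R s k)%R
  end.
(* reciprocal series (meaningful for f 0 = 1, the only use below) *)
Definition fps_inv (f : fps) : fps := fun n => nth 0%R (inv_coefs f n) n.

Definition Wgf : fps := fun n => Posz (w n 0).

(* Main.v *)
Require Import Defs.
From mathcomp Require Import all_boot all_order all_algebra.
Import GRing.Theory Num.Theory.
From mathcomp Require Import zify ring.
From Stdlib Require Import FunctionalExtensionality.

Lemma has_iotaS (P : pred nat) n :
  has P (iota 0 n.+1) = P 0 || has (fun i => P i.+1) (iota 0 n).
Proof. by rewrite /= -(addn0 1) iotaDl has_map. Qed.

Definition Q3 (c : seq nat) := has (fun i => (nth 0 c i == 1) && (2 \in take i c)
   && (2 \in drop i.+1 c)) (iota 0 (size c)).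
Definition Q2 (c : seq nat) := has (fun i => (nth 0 c i == 1)
   && (2 \in drop i.+1 c)) (iota 0 (size c)).

Lemma Q3_cons x t : Q3 (x :: t) = ((x == 2) && Q2 t) || Q3 t.
Proof.
rewrite /Q3 /Q2 [size _]/= has_iotaS /= andbF /=.
case: (x =P 2) => [->|nx] /=.
  rewrite -has_predU; apply: eq_has => i /=.
  by rewrite in_cons /=; case: (nth 0 t i == 1); case: (2 \in drop i.+1 t) => //=; case: (2 \in take i t).
apply: eq_has => i /=; rewrite in_cons.
by have -> : (2 == x) = false by apply/eqP => h; apply: nx.
Qed.

Lemma Q2_cons x t : Q2 (x :: t) = ((x == 1) && (2 \in t)) || Q2 t.
Proof. by rewrite /Q2 [size _]/= has_iotaS /= drop0. Qed.

Lemma Q3_Q2 t : Q3 t -> Q2 t.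
Proof. apply: sub_has => i /=; by case/andP => /andP [-> _] ->. Qed.

Lemma Q2_mem t : Q2 t -> 2 \in t.
Proof. by case/hasP => i _ /andP [_ h]; apply: mem_drop h. Qed.

Definition all12 (c : seq nat) := all (fun x => x \in [:: 1; 2]) c.

Lemma nth12 c j : all12 c -> nth 0 c j <= 2.
Proof.
move=> h; case: (ltnP j (size c)) => hj; last by rewrite nth_default.
have := allP h _ (mem_nth 0 hj); rewrite !inE => /orP [] /eqP -> //.
Qed.

Lemma max_le1 c (r : seq nat) (P : pred nat) : all12 c ->
  (\max_(j <- r | P j) nth 0 c j <= 1) = ~~ has (fun j => P j && (nth 0 c j == 2)) r.
Proof.
move=> h; apply/bigmax_leqP_seq/hasPn => H j jr.
  apply/negP => /andP [pj /eqP e]; have := H j jr pj; by rewrite e.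
move=> pj; have := H j jr; rewrite pj /=; have := @nth12 c j h; case: (nth 0 c j) => [|[|[|]]] //=.
Qed.

Lemma take_has c i : nth 0 c i = 1 -> i < size c ->
  has (fun j => (j <= i) && (nth 0 c j == 2)) (index_iota 0 (size c)) = (2 \in take i c).
Proof.
move=> ci hi; rewrite /index_iota subn0.
apply/hasP/(nthP 0).
  move=> [j]; rewrite mem_iota => /andP [_ jn] /andP [ji /eqP cj].
  have jlt : j < i by rewrite ltn_neqAle ji andbT; apply/eqP => e; move: cj; rewrite e ci.
  exists j; first by rewrite size_take hi.
  by rewrite nth_take.
move=> [j]; rewrite size_take hi => ji cj; exists j.
  by rewrite mem_iota /=; apply: ltn_trans hi.
by rewrite (ltnW ji) /= -cj nth_take.
Qed.

Lemma drop_has c i : nth 0 c i = 1 -> i < size c ->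
  has (fun j => (i <= j) && (nth 0 c j == 2)) (index_iota 0 (size c)) = (2 \in drop i.+1 c).
Proof.
move=> ci hi; rewrite /index_iota subn0.
apply/hasP/(nthP 0).
  move=> [j]; rewrite mem_iota => /andP [_ jn] /andP [ij /eqP cj].
  have jlt : i < j by rewrite ltn_neqAle ij andbT; apply/eqP => e; move: cj; rewrite -e ci.
  change nat in j; exists (j - i.+1); first by rewrite size_drop; apply: ltn_sub2r =>//; apply: leq_ltn_trans jn.
  by rewrite nth_drop subnKC.
move=> [j]; rewrite size_drop => ji cj; exists (i.+1 + j).
  change nat in j; rewrite mem_iota /=; move: ji hi; move: (size c) => n; lia.
by rewrite -nth_drop cj eqxx andbT; lia.
Qed.

Lemma water0 c : all12 c -> (water c == 0) = ~~ Q3 c.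
Proof.
move=> h; rewrite /water sum_nat_seq_eq0 /Q3 -all_predC.
have -> : index_iota 0 (size c) = iota 0 (size c) by rewrite /index_iota subn0.
apply: eq_in_all => i; rewrite mem_iota /= => hi.
rewrite subn_eq0 geq_min.
have := allP h _ (mem_nth 0 hi); rewrite !inE => /orP [] /eqP ci; rewrite ci /=.
  rewrite !max_le1 // -{1}(subn0 (size c)) -/(index_iota 0 (size c)) take_has //.
  rewrite  -{1}(subn0 (size c)) -/(index_iota 0 (size c)) drop_has //.
  by rewrite negb_and.
apply/orP; left; apply/bigmax_leqP_seq => j _ _; exact: nth12.
Qed.

Fixpoint comps (n : nat) : seq (seq nat) :=
  match n with
  | 0 => [:: [::]]
  | S n' => match n' with
            | 0 => [:: [:: 1]]
            | S n'' => map (cons 1) (comps n') ++ map (cons 2) (comps n'')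
            end
  end.

Lemma compsSS n : comps n.+2 = map (cons 1) (comps n.+1) ++ map (cons 2) (comps n).
Proof. by []. Qed.

Lemma mem_map_cons (x y : nat) t (S : seq (seq nat)) :
  (y :: t \in map (cons x) S) = (y == x) && (t \in S).
Proof.
apply/mapP/andP => [[u uS [-> ->]] | [/eqP -> tS]]; first by [].
by exists t.
Qed.

Lemma all12_size c : all12 c -> size c <= sumn c.
Proof.
elim: c => //= x t IH /andP [hx ht]; have := IH ht.
move: hx; rewrite !inE => /orP [] /eqP ->; lia.
Qed.

Lemma mem_seqs12 m s : (s \in seqs12 m) = (size s <= m) && all12 s.
Proof.
elim: m s => [|m IH] [|x t] //=.
rewrite in_cons /= cats0 mem_cat !mem_map_cons !IH /all12 /= !inE.
by case: (x =P 1) => [->|_] /=; rewrite ?orbF ?orbb ?andbF //; case: (x == 2); rewrite ?andbF.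
Qed.

Lemma mem_comps n s : (s \in comps n) = (sumn s == n) && all12 s.
Proof.
elim: n {-2}n (leqnn n) s => [|N IH] n hn s.
  have -> : n = 0 by lia.
  rewrite inE; apply/eqP/andP => [->|[/eqP e h]] //.
  by have := @all12_size s h; rewrite e leqn0 size_eq0 => /eqP.
case: n hn => [|[|n]] hn.
- rewrite inE; apply/eqP/andP => [->|[/eqP e h]] //.
  by have := @all12_size s h; rewrite e leqn0 size_eq0 => /eqP.
- rewrite inE; apply/eqP/andP => [->|[/eqP e h]] //.
  have := @all12_size s h; case: s e h => [|x [|y t]] //= e h; rewrite e //.
  by rewrite addn0 in e; rewrite e.
rewrite compsSS; case: s => [|x t] /=.
  by rewrite mem_cat; apply/negbTE; rewrite negb_or; apply/andP; split;
     apply/mapP => -[u _].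
rewrite mem_cat !mem_map_cons (IH n.+1) ?(IH n); try lia.
rewrite /all12 /= !inE.
case: x => [|[|[|x]]] /=; rewrite ?orbF ?andbF //=.
Qed.

Lemma uniq_map_cons x (S : seq (seq nat)) : uniq S -> uniq (map (cons x) S).
Proof. by move=> u; rewrite map_inj_uniq // => a b [->]. Qed.

Lemma uniq_seqs12 m : uniq (seqs12 m).
Proof.
elim: m => //= m IH; rewrite cats0 mem_cat cat_uniq !uniq_map_cons // andbT /=.
apply/andP; split.
  by rewrite negb_or; apply/andP; split; apply/mapP => -[u _].
by apply/hasP => -[x /mapP [u _ ->] /mapP [v _ e]]; discriminate e.
Qed.

Lemma uniq_comps n : uniq (comps n).
Proof.
elim: n {-2}n (leqnn n) => [|N IH] n hn.
  by have -> : n = 0 by lia.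
case: n hn => [|[|n]] hn //.
rewrite compsSS cat_uniq !uniq_map_cons ?IH //; try lia.
by rewrite andbT /=; apply/hasP => -[x /mapP [u _ ->] /mapP [v _ e]]; discriminate e.
Qed.

Lemma C12_comps n : perm_eq (C12 n) (comps n).
Proof.
apply: uniq_perm; first by rewrite filter_uniq // uniq_seqs12.
  exact: uniq_comps.
move=> s; rewrite mem_filter mem_seqs12 mem_comps.
case: (sumn s =P n) => //= e; case h : (all12 s); rewrite ?andbF //= andbT.
by move: (h); rewrite /all12 => ->; rewrite -e (@all12_size s h).
Qed.

Lemma arith1 n : (n.+2 * n.+2) %/ 4 = (n.+1 * n.+1) %/ 4 + n./2 + 1.
Proof.
have h := odd_double_half n. rewrite -h.
case: (odd n) => /=; set k := n./2; rewrite -!mul2n; nia.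
Qed.

Definition ca n := count (predC Q3) (comps n).
Definition cb n := count (predC Q2) (comps n).
Definition ce n := count (fun c => 2 \notin c) (comps n).

Lemma ceSS n : ce n.+2 = ce n.+1.
Proof.
rewrite /ce compsSS count_cat !count_map.
rewrite (@eq_count _ (preim (cons 2) _) pred0); last by move=> t; rewrite /preim /=.
rewrite count_pred0 addn0; apply: eq_count => t; by rewrite /preim /=.
Qed.

Lemma cbSS n : cb n.+2 = ce n.+1 + cb n.
Proof.
rewrite /cb /ce compsSS count_cat !count_map; congr (_ + _); apply: eq_count => t /=.
  rewrite Q2_cons /=; by case h: (Q2 t); rewrite ?orbT ?orbF // (@Q2_mem t h).
by rewrite Q2_cons.
Qed.

Lemma caSS n : ca n.+2 = ca n.+1 + cb n.
Proof.
rewrite /ca /cb compsSS count_cat !count_map; congr (_ + _); apply: eq_count => t /=.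
  by rewrite Q3_cons.
rewrite Q3_cons /=; by case h: (Q3 t); rewrite ?orbT ?orbF // (@Q3_Q2 t h).
Qed.

Lemma ce_val n : ce n = 1.
Proof.
suff: ce n = 1 /\ ce n.+1 = 1 by case.
by elim: n => [|n [_ IH]]; split => //; rewrite ceSS.
Qed.

Lemma cb_val n : cb n = n./2 + 1.
Proof.
suff: cb n = n./2 + 1 /\ cb n.+1 = n.+1./2 + 1 by case.
elim: n => [|n [IH1 IH2]]; first by split.
split => //; rewrite cbSS ce_val IH1 /=; lia.
Qed.

Lemma ca_val n : ca n = (n * n) %/ 4 + 1.
Proof.
suff: ca n = (n * n) %/ 4 + 1 /\ ca n.+1 = (n.+1 * n.+1) %/ 4 + 1 by case.
elim: n => [|n [IH1 IH2]]; first by split.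
split => //; rewrite caSS cb_val IH2 arith1; lia.
Qed.

Lemma w_val n : w n 0 = (n * n) %/ 4 + 1.
Proof.
rewrite -ca_val /w /ca.
rewrite (permP (C12_comps n)).
apply: eq_in_count => c; rewrite mem_comps => /andP [_ h].
by rewrite water0.
Qed.
Local Open Scope ring_scope.

Lemma size_inv_coefs f n : size (inv_coefs f n) = n.+1.
Proof. by elim: n => //= n IH; rewrite size_rcons IH. Qed.

Lemma inv_coefs_prefix f n k : (k <= n)%N -> nth 0 (inv_coefs f n) k = fps_inv f k.
Proof.
rewrite /fps_inv; elim: n => [|n IH] hk.
  by have -> : k = 0%N by lia.
case: (ltnP k n.+1) => h.
  by rewrite /= nth_rcons size_inv_coefs h IH.
have -> : k = n.+1 by lia.
by [].
Qed.

Lemma fps_invS f n : fps_inv f n.+1 =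
  - \sum_(0 <= k < n.+1) f (n.+1 - k)%N * fps_inv f k.
Proof.
rewrite {1}/fps_inv /= nth_rcons size_inv_coefs ltnn eqxx; congr (- _).
apply: eq_big_nat => k /andP [_ hk]; by rewrite inv_coefs_prefix.
Qed.

Lemma fps_inv0 f : fps_inv f 0 = 1.
Proof. by []. Qed.

Lemma inv_unique f h : f 0%N = 1 -> h 0%N = 1 ->
  (forall n, \sum_(0 <= k < n.+2) f (n.+1 - k)%N * h k = 0) ->
  forall n, h n = fps_inv f n.
Proof.
move=> f0 h0 H n; elim: n {-2}n (leqnn n) => [|N IH] n hn.
  by have -> : n = 0%N by lia.
case: n hn => [|n] hn; first by [].
rewrite fps_invS; have := H n; rewrite big_nat_recr //= subnn f0 mul1r.
move/eqP; rewrite addrC addr_eq0 => /eqP ->; congr (- _).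
apply: eq_big_nat => k /andP [_ hk]; rewrite IH //; lia.
Qed.

Lemma conv_rev f g n : \sum_(0 <= k < n.+1) f (n - k)%N * g k = fps_mul f g n.
Proof.
rewrite /fps_mul big_nat_rev; apply: eq_big_nat => i /andP [_ hi].
by rewrite add0n subSS subKn.
Qed.

Lemma conv_poly s g n : (size s <= n.+1)%N ->
  fps_mul (fps_poly s) g n = \sum_(0 <= i < size s) nth 0 s i * g (n - i)%N.
Proof.
move=> hs; rewrite /fps_mul (@big_cat_nat _ _ _ (size s) 0 n.+1 _ _ (leq0n _) hs) /=.
rewrite [X in _ + X]big1_seq ?addr0 // => i /andP [_]; rewrite mem_index_iota.
by move=> /andP [hi _]; rewrite /fps_poly nth_default // mul0r.
Qed.

Definition pc (p : {poly int}) : fps := fun n => p`_n.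

Lemma fps_poly_pc s : fps_poly s = pc (Poly s).
Proof. by apply: functional_extensionality => n; rewrite /pc coef_Poly. Qed.

Lemma fps_mul_pc p q : fps_mul (pc p) (pc q) = pc (p * q).
Proof.
apply: functional_extensionality => n; rewrite /pc coefM /fps_mul big_mkord.
by [].
Qed.

Lemma D_eq : fps_mul (fps_mul (fps_poly [:: 1; -1]) (fps_poly [:: 1; -1]))
                     (fps_poly [:: 1; 0; -1]) = fps_poly [:: 1; -2; 0; 2; -1].
Proof.
rewrite !fps_poly_pc !fps_mul_pc; congr pc.
rewrite /= !cons_poly_def; ring.
Qed.
Local Open Scope ring_scope.

Definition hH (m : nat) : int := Posz ((m.+2 * m.+2) %/ 4)%N.

Lemma arith2 k : ((k.+2 * k.+2) %/ 4 = (k * k) %/ 4 + k + 1)%N.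
Proof.
have h := odd_double_half k. rewrite -h.
case: (odd k) => /=; set j := k./2; rewrite -!mul2n; nia.
Qed.

Lemma test1 : fps_mul (fps_poly [:: 1; -2; 0; 2; -1]) hH 1 = 0.
Proof. by rewrite /fps_mul unlock. Qed.
Lemma test3 : fps_mul (fps_poly [:: 1; -2; 0; 2; -1]) hH 3 = 0.
Proof. by rewrite /fps_mul unlock. Qed.

Lemma hH_rec m : fps_mul (fps_poly [:: 1; -2; 0; 2; -1]) hH (m + 4)%N = 0.
Proof.
rewrite conv_poly /=; last by rewrite addn4.
rewrite !big_nat_recl // big_geq // !addn4 !subSS !subn0 /hH /= !arith2.
lia.
Qed.

Lemma hH_inv n : hH n = fps_inv (fps_poly [:: 1; -2; 0; 2; -1]) n.
Proof.
apply: inv_unique => // {}n; rewrite conv_rev.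
case: n => [|[|[|m]]]; try by rewrite /fps_mul unlock.
by have := hH_rec m; rewrite addn4.
Qed.

Lemma one_inv n : 1 = fps_inv (fps_poly [:: 1; -1]) n.
Proof.
apply: (@inv_unique _ (fun _ => 1)) => // {}n; rewrite conv_rev.
rewrite conv_poly //= !big_nat_recl // big_geq //.
Qed.

Lemma Wgf_val n : Wgf n = Posz ((n * n) %/ 4 + 1)%N.
Proof. by rewrite /Wgf w_val. Qed.

Local Close Scope ring_scope.
Theorem theorem2p1 :
  (Wgf = fps_add (fps_inv (fps_poly [:: 1; -1]%R))
                 (fps_mul (fps_poly [:: 0; 0; 1]%R)
                    (fps_inv (fps_mul (fps_mul (fps_poly [:: 1; -1]%R)
                                               (fps_poly [:: 1; -1]%R))
                                      (fps_poly [:: 1; 0; -1]%R)))))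
  /\ (Wgf = fps_mul (fps_poly [:: 1; -1; 0; 1]%R)
                    (fps_inv (fps_poly [:: 1; -2; 0; 2; -1]%R)))
  /\ (forall n : nat, w n 0 = (n * n) %/ 4 + 1)
  /\ (forall n : nat, 2 <= n -> w n 0 = w (n - 2) 0 + n - 1)
  /\ (forall n : nat, 4 <= n ->
        Posz (w n 0) = (2 * Posz (w (n - 1) 0) - 2 * Posz (w (n - 3) 0)
                      + Posz (w (n - 4) 0))%R).
Proof.
have HI : fps_inv (fps_poly [:: 1; -2; 0; 2; -1]%R) = hH.
  by apply: functional_extensionality => n; rewrite hH_inv.
split.
  rewrite D_eq HI; apply: functional_extensionality => n.
  rewrite /fps_add -one_inv Wgf_val.
  case: n => [|[|m]]; try by rewrite /fps_mul unlock.
  rewrite conv_poly //= !big_nat_recl // big_geq // !subSS !subn0 /hH /=.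
  lia.
split.
  rewrite HI; apply: functional_extensionality => n; rewrite Wgf_val.
  case: n => [|[|[|m]]]; try by rewrite /fps_mul unlock.
  rewrite conv_poly //= !big_nat_recl // big_geq // !subSS !subn0 /hH /= !arith2.
  lia.
split; first exact: w_val.
split.
  move=> n hn; rewrite !w_val; case: n hn => [|[|m]] // _.
  rewrite arith2 !subSS subn0; lia.
move=> n hn; rewrite !w_val; case: n hn => [|[|[|[|m]]]] // _.
rewrite !subSS !subn0 !arith2; lia.
Qed.
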